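(* Let $f:\mathbb{R}^n\to\mathbb{R}$ be $L$-smooth and $\mu$-strongly convex with $0<\mu<L$ (Euclidean norm). Then the iterates of Algorithm AGMsDR-SC (either option) satisfy, for every $k\ge0$, $$A_kf(x^k)\le\min_{x\in\mathbb{R}^n}\psi_k(x)=\psi_k(v^k),$$ and for every $k\ge1$, $$A_k\ge\max\left\{\frac{k^2}{4L},\ \frac1L\left(1-\sqrt{\frac{\mu}{L}}\right)^{-(k-1)}\right\}.$$
   Context: $\|\cdot\|=\|\cdot\|_2$ is the Euclidean norm on $\mathbb{R}^n$. $f$ is $L$-smooth if it is continuously differentiable with $\|\nabla f(x)-\nabla f(y)\|_2\le L\|x-y\|_2$ for all $x,y$; $f$ is $\mu$-strongly convex if $f(y)\ge f(x)+\langle\nabla f(x),y-x\rangle+\frac\mu2\|y-x\|_2^2$ for all $x,y$. Algorithm AGMsDR-SC (input $x^0$, and $L$ for Option (a)): set $A_0=0$, $\tau_0=1$, $v^0=x^0$, $\psi_0(x)=\frac12\|x-x^0\|_2^2$. For $k=0,1,2,\dots$: 1. Choose $\beta_k\in\arg\min_{\beta\in[0,1]} f(v^k+\beta(x^k-v^k))$ and set $y^k=v^k+\beta_k(x^k-v^k)$. 2. Option (a): $x^{k+1}=y^k-\frac1L\nabla f(y^k)$, and $a_{k+1}>0$ solves $\frac{a_{k+1}^2}{(\tau_k+\mu a_{k+1})(A_k+a_{k+1})}=\frac1L$. Option (b): $h_{k+1}\in\arg\min_{h\ge0}f\big(y^k-h\,\nabla f(y^k)/\|\nabla f(y^k)\|_2\big)$,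 $x^{k+1}=y^k-h_{k+1}\nabla f(y^k)/\|\nabla f(y^k)\|_2$, and $a_{k+1}$ is the largest solution of $$f(y^k)-\frac{a_{k+1}^2\|\nabla f(y^k)\|_2^2}{2(\tau_k+\mu a_{k+1})(A_k+a_{k+1})}+\frac{\mu\tau_ka_{k+1}\|v^k-y^k\|_2^2}{2(\tau_k+\mu a_{k+1})(A_k+a_{k+1})}=f(x^{k+1}).$$ 3. $A_{k+1}=A_k+a_{k+1}$, $\tau_{k+1}=\tau_k+\mu a_{k+1}$; $\psi_{k+1}(x)=\psi_k(x)+a_{k+1}\{f(y^k)+\langle\nabla f(y^k),x-y^k\rangle+\frac\mu2\|x-y^k\|_2^2\}$; $v^{k+1}=\arg\min_x\psi_{k+1}(x)$. All minima are assumed attained and $\nabla f(y^k)\neq0$ for all iterations considered. *)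

(* Defs.v *)
From mathcomp Require Import ssreflect ssrfun ssrbool eqtype ssrnat fintype bigop.
From Stdlib Require Import Reals.
Open Scope R_scope.

Definition vec (n : nat) := 'I_n -> R.

Definition vadd {n} (x y : vec n) : vec n := fun i => x i + y i.
Definition vsub {n} (x y : vec n) : vec n := fun i => x i - y i.
Definition vscale {n} (c : R) (x : vec n) : vec n := fun i => c * x i.

Definition dot {n} (x y : vec n) : R := \big[Rplus/R0]_(i < n) (x i * y i).
Definition norm2 {n} (x : vec n) : R := sqrt (dot x x).

Definition has_gradient_at {n} (f : vec n -> R) (x g : vec n) : Prop :=
  forall eps, 0 < eps -> exists delta, 0 < delta /\
    forall h : vec n, norm2 h < delta ->
      Rabs (f (vadd x h) - f x - dot g h) <= eps * norm2 h.

Definition L_smooth {n} (f : vec n -> R) (gradf : vec n -> vec n) (L : R) : Prop :=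
  (forall x, has_gradient_at f x (gradf x)) /\
  (forall x y, norm2 (vsub (gradf x) (gradf y)) <= L * norm2 (vsub x y)).

Definition strongly_convex {n} (f : vec n -> R) (gradf : vec n -> vec n) (mu : R) : Prop :=
  forall x y, f y >= f x + dot (gradf x) (vsub y x) + mu / 2 * (norm2 (vsub y x)) ^ 2.

Fixpoint psi {n} (f : vec n -> R) (gradf : vec n -> vec n) (mu : R) (x0 : vec n)
    (a : nat -> R) (y : nat -> vec n) (k : nat) (z : vec n) : R :=
  match k with
  | O => 1 / 2 * (norm2 (vsub z x0)) ^ 2
  | S j => psi f gradf mu x0 a y j z
           + a (S j) * (f (y j) + dot (gradf (y j)) (vsub z (y j))
                        + mu / 2 * (norm2 (vsub z (y j))) ^ 2)
  end.

(* One run of AGMsDR-SC.  opt = true: Option (a); opt = false: Option (b). *)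
Definition AGMsDR_SC_run {n} (f : vec n -> R) (gradf : vec n -> vec n) (L mu : R)
    (opt : bool) (x v y : nat -> vec n) (A a tau beta h : nat -> R) : Prop :=
  A 0%nat = 0 /\ tau 0%nat = 1 /\ v 0%nat = x 0%nat /\
  forall k : nat,
    (0 <= beta k <= 1 /\
     (forall b, 0 <= b <= 1 ->
        f (vadd (v k) (vscale (beta k) (vsub (x k) (v k))))
        <= f (vadd (v k) (vscale b (vsub (x k) (v k))))) /\
     y k = vadd (v k) (vscale (beta k) (vsub (x k) (v k)))) /\
    (if opt then
       x (S k) = vsub (y k) (vscale (1 / L) (gradf (y k))) /\
       0 < a (S k) /\
       a (S k) ^ 2 / ((tau k + mu * a (S k)) * (A k + a (S k))) = 1 / L
     else
       let g := gradf (y k) in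
       let d := vscale (1 / norm2 g) g in
       let eqn := fun a' : R =>
         f (y k) - a' ^ 2 * (norm2 g) ^ 2 / (2 * (tau k + mu * a') * (A k + a'))
         + mu * tau k * a' * (norm2 (vsub (v k) (y k))) ^ 2
             / (2 * (tau k + mu * a') * (A k + a'))
         = f (x (S k)) in
       0 <= h (S k) /\
       (forall h', 0 <= h' -> f (vsub (y k) (vscale (h (S k)) d))
                              <= f (vsub (y k) (vscale h' d))) /\
       x (S k) = vsub (y k) (vscale (h (S k)) d) /\
       eqn (a (S k)) /\ (forall a', eqn a' -> a' <= a (S k))) /\
    A (S k) = A k + a (S k) /\
    tau (S k) = tau k + mu * a (S k) /\
    (forall z, psi f gradf mu (x 0%nat) a y (S k) (v (S k))
               <= psi f gradf mu (x 0%nat) a y (S k) z).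

(* Main.v *)
Require Import Defs.
From HB Require Import structures.
From mathcomp Require Import ssreflect ssrfun ssrbool eqtype ssrnat fintype bigop.
From Stdlib Require Import Reals Lra Psatz FunctionalExtensionality.
Open Scope R_scope.
HB.instance Definition _ := Monoid.isComLaw.Build R R0 Rplus (fun a b c => esym (Rplus_assoc a b c)) Rplus_comm Rplus_0_l.
Lemma sum_scal n c (F : 'I_n -> R) : \big[Rplus/R0]_(i < n) (c * F i) = c * \big[Rplus/R0]_(i < n) F i.
Proof. elim: n F => [|n IH] F. rewrite !big_ord0. by rewrite Rmult_0_r. rewrite !big_ord_recr /= IH. exact: (esym (Rmult_plus_distr_l _ _ _)). Qed.
Lemma sum_add n (F G : 'I_n -> R) : \big[Rplus/R0]_(i < n) (F i + G i) = \big[Rplus/R0]_(i < n) F i + \big[Rplus/R0]_(i < n) G i.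
Proof. by rewrite big_split. Qed.
Lemma sum_ge0 n (F : 'I_n -> R) : (forall i, 0 <= F i) -> 0 <= \big[Rplus/R0]_(i < n) F i.
Proof. move=> H. apply: (big_ind (fun x => 0 <= x)) => //. exact: Rle_refl. move=> x y; lra. Qed.
Lemma term_le_sum n (F : 'I_n -> R) : (forall i, 0 <= F i) -> forall i, F i <= \big[Rplus/R0]_(i < n) F i.
Proof.
move=> H i. rewrite (bigD1 i) //=.
have : 0 <= \big[Rplus/R0]_(j < n | j != i) F j.
  apply: (big_ind (fun x => 0 <= x)) => //. exact: Rle_refl. move=> x y; lra.
move=> Hs. have := Rplus_le_compat_l (F i) _ _ Hs. rewrite Rplus_0_r. by [].
Qed.

Section Dots.
Context {n : nat}.
Implicit Types x y z : vec n.
Lemma dot_comm x y : dot x y = dot y x.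
Proof. rewrite /dot. apply: eq_bigr => i _. apply: Rmult_comm. Qed.
Lemma dot_addl x y z : dot (vadd x y) z = dot x z + dot y z.
Proof. rewrite /dot -sum_add. apply: eq_bigr => i _. rewrite /vadd. ring. Qed.
Lemma dot_scalel c x z : dot (vscale c x) z = c * dot x z.
Proof. rewrite /dot -sum_scal. apply: eq_bigr => i _. rewrite /vscale. ring. Qed.
Lemma dot_subl x y z : dot (vsub x y) z = dot x z - dot y z.
Proof.
have -> : vsub x y = vadd x (vscale (-1) y).
  apply: functional_extensionality => i. rewrite /vsub /vadd /vscale. ring.
rewrite dot_addl dot_scalel. ring.
Qed.
Lemma dot_addr x y z : dot z (vadd x y) = dot z x + dot z y.
Proof. by rewrite dot_comm dot_addl (dot_comm x) (dot_comm y). Qed.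
Lemma dot_subr x y z : dot z (vsub x y) = dot z x - dot z y.
Proof. by rewrite dot_comm dot_subl (dot_comm x) (dot_comm y). Qed.
Lemma dot_scaler c x z : dot z (vscale c x) = c * dot z x.
Proof. by rewrite dot_comm dot_scalel (dot_comm x). Qed.
Lemma dot_ge0 x : 0 <= dot x x.
Proof. apply: sum_ge0 => i. apply: Rle_0_sqr. Qed.
Lemma norm2_sq x : norm2 x ^ 2 = dot x x.
Proof. rewrite /norm2. apply: pow2_sqrt. apply: dot_ge0. Qed.
Lemma norm2_ge0 x : 0 <= norm2 x.
Proof. apply: sqrt_pos. Qed.
Lemma dot_self0 x : dot x x = 0 -> forall i, x i = 0.
Proof.
move=> H i. have := @term_le_sum n (fun j => x j * x j) (fun j => Rle_0_sqr (x j)) i.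
rewrite -/(dot x x) H => Hi. nra.
Qed.
Lemma dot_self0_vec x : dot x x = 0 -> x = (fun _ => 0).
Proof. move=> H. apply: functional_extensionality. exact: dot_self0. Qed.
Lemma dot_zerol z : dot (fun _ => 0) z = 0.
Proof.
have -> : (fun _ : 'I_n => 0) = vscale 0 z. apply: functional_extensionality => i; rewrite /vscale; ring.
rewrite dot_scalel; ring.
Qed.
Lemma CS x y : dot x y <= norm2 x * norm2 y.
Proof.
have Hq : forall t, 0 <= t^2 * dot x x - 2 * t * dot x y + dot y y.
  move=> t. have := dot_ge0 (vsub (vscale t x) y).
  rewrite !dot_subl !dot_subr !dot_scalel !dot_scaler (dot_comm y x). nra.
have [Hx|Hx] := Req_dec (dot x x) 0.
  rewrite (dot_self0_vec x Hx) dot_zerol. apply: Rmult_le_pos; apply: norm2_ge0.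
have Hxp : 0 < dot x x by have := dot_ge0 x; lra.
have Hyy := dot_ge0 y.
have H2 : dot x y ^ 2 <= dot x x * dot y y.
  have := Hq (dot x y / dot x x). move=> H.
  have E : (dot x y / dot x x) ^ 2 * dot x x - 2 * (dot x y / dot x x) * dot x y + dot y y
           = (dot x x * dot y y - dot x y ^ 2) / dot x x by field; lra.
  rewrite E in H.
  have : 0 <= dot x x * dot y y - dot x y ^ 2.
    have := Rmult_le_compat_r (dot x x) _ _ (Rlt_le _ _ Hxp) H. rewrite Rmult_0_l.
    have -> : (dot x x * dot y y - dot x y ^ 2) / dot x x * dot x x = dot x x * dot y y - dot x y ^ 2 by field; lra.
    done.
  lra.
rewrite /norm2 -sqrt_mult; try apply: dot_ge0.
have [Hneg|Hpos] := Rle_or_lt (dot x y) 0.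
  have := sqrt_pos (dot x x * dot y y). lra.
rewrite -(sqrt_pow2 (dot x y)); last lra.
apply: sqrt_le_1_alt. lra.
Qed.
Lemma norm2_scale c x : norm2 (vscale c x) = Rabs c * norm2 x.
Proof.
rewrite /norm2 dot_scalel dot_scaler -Rmult_assoc sqrt_mult.
- by rewrite sqrt_Rsqr_abs.
- apply: Rle_0_sqr.
- apply: dot_ge0.
Qed.
End Dots.
Lemma frac_lt1 a : 0 <= a -> a / (2 * (a + 1)) < 1.
Proof.
move=> Ha. apply: (Rmult_lt_reg_r (2 * (a + 1))); first lra.
have -> : a / (2 * (a + 1)) * (2 * (a + 1)) = a by field; lra. lra.
Qed.
Lemma line_opt n (f : vec n -> R) (g x v : vec n) (beta : R) :
  has_gradient_at f (vadd v (vscale beta (vsub x v))) g ->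
  0 <= beta <= 1 ->
  (forall b, 0 <= b <= 1 -> f (vadd v (vscale beta (vsub x v))) <= f (vadd v (vscale b (vsub x v)))) ->
  0 <= dot g (vsub v (vadd v (vscale beta (vsub x v)))).
Proof.
move=> Hg Hb Hmin.
set D := vsub x v. set y := vadd v (vscale beta D).
have -> : vsub v y = vscale (-beta) D.
  apply: functional_extensionality => i. rewrite /y /vsub /vadd /vscale. ring.
rewrite dot_scaler.
have [Hb0|Hbp] := Req_dec beta 0. rewrite Hb0; lra.
suff : dot g D <= 0 by nra.
apply: Rnot_lt_le => Hc. set c := dot g D in Hc.
set nD := norm2 D. have HnD : 0 <= nD by apply: norm2_ge0.
have Heps : 0 < c / (2 * (nD + 1)) by apply: Rdiv_lt_0_compat; lra.
have [delta [Hdel Hd]] := Hg _ Heps.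
set t := Rmin beta (delta / (2 * (nD + 1))).
have Ht1 : t <= beta by apply: Rmin_l.
have Ht2 : t <= delta / (2 * (nD + 1)) by apply: Rmin_r.
have Htp : 0 < t.
  apply: Rmin_pos; first lra. apply: Rdiv_lt_0_compat; lra.
set h := vscale (-t) D.
have Hnh : norm2 h = t * nD.
  rewrite /h norm2_scale Rabs_Ropp Rabs_pos_eq //. lra.
have Hdh : norm2 h < delta.
  rewrite Hnh.
  have : delta / (2 * (nD + 1)) * nD < delta.
    have -> : delta / (2 * (nD + 1)) * nD = delta * (nD / (2 * (nD + 1))) by field; lra.
    have := frac_lt1 nD HnD.
    nra.
  nra.
have H1 := Hd h Hdh.
have Edh : dot g h = - t * c by rewrite /h dot_scaler.
have Eyh : vadd y h = vadd v (vscale (beta - t) D).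
  apply: functional_extensionality => i. rewrite /y /h /vadd /vscale. ring.
have H2 := Hmin (beta - t) ltac:(lra).
rewrite -/y -Eyh in H2.
rewrite Edh Hnh in H1.
have H3 := Rle_abs (f (vadd y h) - f y - - t * c).
have : c / (2 * (nD + 1)) * (t * nD) < t * c.
  have -> : c / (2 * (nD + 1)) * (t * nD) = t * c * (nD / (2 * (nD + 1))) by field; lra.
  have := frac_lt1 nD HnD.
  have : 0 <= nD / (2 * (nD + 1)) by apply: Rmult_le_pos; [lra | apply: Rlt_le; apply: Rinv_0_lt_compat; lra].
  move=> Hq0 Hq1. have Htc : 0 < t * c by nra. nra.
move=> Hlt. rewrite -/D -/y in H1. clearbody t h y c nD D. lra.
Qed.
Lemma deriv_line n (f : vec n -> R) (gradf : vec n -> vec n)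
  (Hg : forall x, has_gradient_at f x (gradf x)) (y d : vec n) (t : R) :
  derivable_pt_lim (fun s => f (vadd y (vscale s d))) t (dot (gradf (vadd y (vscale t d))) d).
Proof.
move=> eps Heps.
set p := vadd y (vscale t d). set G := gradf p. set nd := norm2 d.
have Hnd : 0 <= nd by apply: norm2_ge0.
have Heps' : 0 < eps / (2 * (nd + 1)) by apply: Rdiv_lt_0_compat; lra.
have [delta' [Hdel Hd]] := Hg p _ Heps'.
have Hdp : 0 < delta' / (nd + 1) by apply: Rdiv_lt_0_compat; lra.
exists (mkposreal _ Hdp) => h Hh0 Hh /=.
have E : vadd y (vscale (t + h) d) = vadd p (vscale h d).
  apply: functional_extensionality => i. rewrite /p /vadd /vscale. ring.
rewrite E.
have Hn : norm2 (vscale h d) = Rabs h * nd by rewrite norm2_scale.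
have Hah : 0 < Rabs h by apply: Rabs_pos_lt.
have Hlt : norm2 (vscale h d) < delta'.
  rewrite Hn. simpl in Hh.
  have : Rabs h * (nd + 1) < delta'.
    have := Rmult_lt_compat_r (nd + 1) _ _ ltac:(lra) Hh.
    have -> : delta' / (nd + 1) * (nd + 1) = delta' by field; lra. done.
  nra.
have H1 := Hd _ Hlt. rewrite dot_scaler Hn in H1. rewrite -/G.
have -> : (f (vadd p (vscale h d)) - f p) / h - dot G d
          = (f (vadd p (vscale h d)) - f p - h * dot G d) / h by field.
rewrite /Rdiv Rabs_mult Rabs_inv.
apply: (Rle_lt_trans _ (eps / (2 * (nd + 1)) * nd)).
  apply: (Rmult_le_reg_r (Rabs h)) => //.
  have -> : Rabs (f (vadd p (vscale h d)) - f p - h * dot G d) * / Rabs h * Rabs h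
           = Rabs (f (vadd p (vscale h d)) - f p - h * dot G d) by field; lra.
  have -> : eps / (2 * (nd + 1)) * nd * Rabs h = eps / (2 * (nd + 1)) * (Rabs h * nd) by ring.
  by rewrite -/G in H1.
have -> : eps / (2 * (nd + 1)) * nd = eps * (nd / (2 * (nd + 1))) by field; lra.
have := frac_lt1 nd Hnd. nra.
Qed.

Lemma descent n (f : vec n -> R) (gradf : vec n -> vec n) (L : R) :
  0 < L -> L_smooth f gradf L -> forall y d,
  f (vadd y d) <= f y + dot (gradf y) d + L / 2 * dot d d.
Proof.
move=> HL [Hg Hlip] y d.
set a1 := dot (gradf y) d. set a2 := L / 2 * dot d d.
set phi := fun s => f (vadd y (vscale s d)).
pose psi := fun s => phi s - s * a1 - a2 * s ^ 2.
have Hd : forall c, 0 <= c <= 1 -> derivable_pt_lim psi c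
            (dot (gradf (vadd y (vscale c d))) d - a1 - a2 * (INR 2 * c ^ 1)).
  move=> c _.
  have H1 := deriv_line n f gradf Hg y d c.
  have H2 := derivable_pt_lim_mult id (fct_cte a1) c 1 0 (derivable_pt_lim_id c) (derivable_pt_lim_const a1 c).
  have H3 := derivable_pt_lim_scal (fun x => x ^ 2) a2 c _ (derivable_pt_lim_pow c 2).
  have H4 := derivable_pt_lim_minus _ _ _ _ _ (derivable_pt_lim_minus _ _ _ _ _ H1 H2) H3.
  have -> : dot (gradf (vadd y (vscale c d))) d - a1 - a2 * (INR 2 * c ^ 1) =
        dot (gradf (vadd y (vscale c d))) d - (1 * fct_cte a1 c + id c * 0) - a2 * (INR 2 * c ^ Nat.pred 2).
    rewrite /fct_cte /id /=. ring.
  exact: H4.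
have [c [Hc Hcr]] := MVT_cor2 psi _ 0 1 Rlt_0_1 Hd.
have Hv : vadd y (vscale 0 d) = y.
  apply: functional_extensionality => i. rewrite /vadd /vscale. ring.
have Hv1 : vadd y (vscale 1 d) = vadd y d.
  apply: functional_extensionality => i. rewrite /vadd /vscale. ring.
rewrite /psi /phi Hv Hv1 in Hc.
have Hdiff : dot (gradf (vadd y (vscale c d))) d - a1 <= L * c * dot d d.
  have HCS := CS (vsub (gradf (vadd y (vscale c d))) (gradf y)) d.
  rewrite dot_subl -/a1 in HCS.
  have Hl := Hlip (vadd y (vscale c d)) y.
  have E : vsub (vadd y (vscale c d)) y = vscale c d.
    apply: functional_extensionality => i. rewrite /vsub /vadd /vscale. ring.
  rewrite E norm2_scale Rabs_pos_eq in Hl; last lra.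
  have Hn := norm2_ge0 d.
  have Hn2 := norm2_sq d.
  have Hng := norm2_ge0 (vsub (gradf (vadd y (vscale c d))) (gradf y)).
  clearbody a1 a2 phi psi.
  nra.
simpl in Hc. rewrite /INR in Hc.
have : 0 <= dot d d by apply: dot_ge0.
rewrite /a2 in Hc *. nra.
Qed.
Lemma opt_b_root (L mu tau A fy T G W amax : R) :
  0 < mu -> mu < L -> 0 < tau -> 0 <= A -> 0 < G -> 0 <= W ->
  T <= fy - G / (2 * L) -> fy - G / (2 * mu) < T ->
  (forall a', fy - a' ^ 2 * G / (2 * (tau + mu * a') * (A + a'))
              + mu * tau * a' * W / (2 * (tau + mu * a') * (A + a')) = T -> a' <= amax) ->
  0 < amax /\ L * amax ^ 2 >= (tau + mu * amax) * (A + amax).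
Proof.
move=> Hmu HmuL Htau HA HG HW HT1 HT2 Hmax.
remember (tau + mu * A) as b eqn:Hbd.
have Hb : 0 < b by nra.
remember (b ^ 2 + 4 * (L - mu) * tau * A) as disc eqn:Hdd.
have Hdisc : 0 <= disc.
  have : 0 <= (L - mu) * tau * A by apply: Rmult_le_pos; nra.
  nra.
have Hs := sqrt_pos disc. have Hs2 := sqrt_sqrt disc Hdisc.
move: (sqrt disc) Hs Hs2 => s Hs Hs2.
have HaL := Rdiv_lt_0_compat (b + s) (2 * (L - mu)) ltac:(lra) ltac:(lra).
have HaL2 : 2 * (L - mu) * ((b + s) / (2 * (L - mu))) = b + s by field; lra.
move: ((b + s) / (2 * (L - mu))) HaL HaL2 => aL HaL HaL2.
have HQ : (L - mu) * aL ^ 2 - b * aL - tau * A = 0.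
  have E : 4 * (L - mu) * ((L - mu) * aL ^ 2 - b * aL - tau * A)
           = (2 * (L - mu) * aL) ^ 2 - 2 * b * (2 * (L - mu) * aL) - 4 * (L - mu) * tau * A by ring.
  rewrite HaL2 in E.
  have : 4 * (L - mu) * ((L - mu) * aL ^ 2 - b * aL - tau * A) = 0.
    rewrite E. nra.
  move=> H. have HL0 : 4 * (L - mu) <> 0 by lra.
  by case: (Rmult_integral _ _ H) => // /HL0.
have HLaL : L * aL ^ 2 = (tau + mu * aL) * (A + aL) by nra.
remember (fy - T) as e eqn:Hed.
have He1 : G / (2 * L) <= e by lra.
have He2 : 2 * mu * e < G.
  have : e < G / (2 * mu) by lra.
  move=> H. have := Rmult_lt_compat_l (2 * mu) _ _ ltac:(lra) H.
  have -> : 2 * mu * (G / (2 * mu)) = G by field; lra. done.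
have He1' : G <= 2 * L * e.
  have := Rmult_le_compat_l (2 * L) _ _ ltac:(lra) He1.
  have -> : 2 * L * (G / (2 * L)) = G by field; lra. done.
remember (2 * mu * e - G) as c2 eqn:Hc2d.
remember (2 * e * (tau + mu * A) + mu * tau * W) as c1 eqn:Hc1d.
remember (2 * e * tau * A) as c0 eqn:Hc0d.
have Hc2 : c2 < 0 by lra.
have HP : forall r, c2 * r ^ 2 + c1 * r + c0
            = e * (2 * (tau + mu * r) * (A + r)) - r ^ 2 * G + mu * tau * r * W.
  move=> r. rewrite Hc2d Hc1d Hc0d. ring.
have HPaL : 0 <= c2 * aL ^ 2 + c1 * aL + c0.
  rewrite HP. have -> : e * (2 * (tau + mu * aL) * (A + aL)) = 2 * e * (L * aL ^ 2) by rewrite HLaL; ring.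
  have : 0 <= aL ^ 2 * (2 * L * e - G) by apply: Rmult_le_pos; nra.
  have h1 : 0 < mu * tau by nra. have h2 : 0 < mu * tau * aL by nra.
  have : 0 <= mu * tau * aL * W by nra.
  nra.
remember (c1 ^ 2 - 4 * c2 * c0) as Delta eqn:HDd.
have HDelta : (2 * c2 * aL + c1) ^ 2 <= Delta.
  have E : Delta = (2 * c2 * aL + c1) ^ 2 - 4 * c2 * (c2 * aL ^ 2 + c1 * aL + c0) by rewrite HDd; ring.
  rewrite E. nra.
have HD0 : 0 <= Delta by have := pow2_ge_0 (2 * c2 * aL + c1); lra.
have Hsd := sqrt_pos Delta. have Hsd2 := sqrt_sqrt Delta HD0.
move: (sqrt Delta) Hsd Hsd2 => sd Hsd Hsd2.
have Hsdge : - (2 * c2 * aL + c1) <= sd.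
  have [H|H] := Rle_or_lt (- (2 * c2 * aL + c1)) 0. lra.
  nra.
have Hr : aL <= (c1 + sd) / (- 2 * c2).
  apply: (Rmult_le_reg_r (- 2 * c2)); first lra.
  have -> : (c1 + sd) / (- 2 * c2) * (- 2 * c2) = c1 + sd by field; lra.
  lra.
have HPr : c2 * ((c1 + sd) / (- 2 * c2)) ^ 2 + c1 * ((c1 + sd) / (- 2 * c2)) + c0 = 0.
  have -> : c0 = (c1 ^ 2 - Delta) / (4 * c2) by rewrite HDd; field; lra.
  rewrite -Hsd2. field. lra.
move: ((c1 + sd) / (- 2 * c2)) Hr HPr => r Hr HPr.
have Hrpos : 0 < r by lra.
have HD : 0 < 2 * (tau + mu * r) * (A + r) by nra.
have Heq : fy - r ^ 2 * G / (2 * (tau + mu * r) * (A + r))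
              + mu * tau * r * W / (2 * (tau + mu * r) * (A + r)) = T.
  rewrite HP in HPr.
  apply: (Rmult_eq_reg_r (2 * (tau + mu * r) * (A + r))); last lra.
  have -> : (fy - r ^ 2 * G / (2 * (tau + mu * r) * (A + r)) +
      mu * tau * r * W / (2 * (tau + mu * r) * (A + r))) * (2 * (tau + mu * r) * (A + r))
      = fy * (2 * (tau + mu * r) * (A + r)) - r ^ 2 * G + mu * tau * r * W.
    field. split; nra.
  rewrite Hed in HPr. nra.
have Ham := Hmax r Heq.
split; first lra.
have HaL2' : b <= 2 * (L - mu) * aL by lra.
have : 0 <= (amax - aL) * ((L - mu) * (amax + aL) - b) by apply: Rmult_le_pos; nra.
nra.
Qed.
Lemma dot_sub_sq n (x y : vec n) : dot (vsub x y) (vsub x y) = dot x x - 2 * dot x y + dot y y.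
Proof. rewrite !dot_subl !dot_subr (dot_comm y x). ring. Qed.

Lemma quad_lb n (d w g : vec n) (tau mu a : R) : 0 < tau -> 0 <= a -> 0 < mu ->
  (mu * a * tau * dot w w + 2 * tau * a * dot g w - a ^ 2 * dot g g) / (2 * (tau + mu * a))
  <= tau / 2 * dot (vsub d w) (vsub d w) + a * (dot g d + mu / 2 * dot d d).
Proof.
move=> Ht Ha Hmu.
have Hu := dot_ge0 (vsub (vscale (tau + mu * a) d) (vsub (vscale tau w) (vscale a g))).
rewrite !dot_subl !dot_subr !dot_scalel !dot_scaler in Hu.
rewrite dot_sub_sq.
rewrite ?(dot_comm w d) ?(dot_comm g d) ?(dot_comm g w) in Hu *.
have Htp : 0 < 2 * (tau + mu * a) by nra.
apply: (Rmult_le_reg_r (2 * (tau + mu * a))) => //.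
have -> : (mu * a * tau * dot w w + 2 * tau * a * dot w g - a ^ 2 * dot g g) / (2 * (tau + mu * a)) * (2 * (tau + mu * a)) = mu * a * tau * dot w w + 2 * tau * a * dot w g - a ^ 2 * dot g g by field; lra.
nra.
Qed.

Lemma psi_step n (Psi : vec n -> R) (c tau mu a fy : R) (v y g v' : vec n) :
  0 < tau + mu * a ->
  (forall z, Psi z = c + tau / 2 * dot (vsub z v) (vsub z v)
      + a * (fy + dot g (vsub z y) + mu / 2 * dot (vsub z y) (vsub z y))) ->
  (forall z, Psi v' <= Psi z) ->
  forall z, Psi z = Psi v' + (tau + mu * a) / 2 * dot (vsub z v') (vsub z v').
Proof.
move=> Ht' HPsi Hmin.
remember (tau + mu * a) as t' eqn:Ht'd.
have Hzm : forall z, dot z (vscale (1 / t') (vadd (vscale tau v) (vsub (vscale (a * mu) y) (vscale a g))))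
     = (tau * dot z v + a * mu * dot z y - a * dot z g) / t'.
  move=> z. rewrite dot_scaler dot_addr dot_subr !dot_scaler. move: (dot z v) (dot z y) (dot z g) => p q r. field. lra.
move: (vscale (1 / t') (vadd (vscale tau v) (vsub (vscale (a * mu) y) (vscale a g)))) Hzm => m Hzm.
have HK : forall z, Psi z = (c + a * fy + tau / 2 * dot v v - a * dot g y + a * mu / 2 * dot y y - t' / 2 * dot m m)
              + t' / 2 * dot (vsub z m) (vsub z m).
  move=> z. rewrite HPsi !dot_sub_sq dot_subr (Hzm z) (dot_comm g z). rewrite Ht'd. field.
  lra.
have H1 := Hmin m. rewrite (HK m) (HK v') (dot_sub_sq _ m m) in H1.
have H2 := dot_ge0 (vsub v' m).
have H0 : dot (vsub v' m) (vsub v' m) = 0.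
  have Ht2 : 0 < t' / 2 by lra.
  have : t' / 2 * dot (vsub v' m) (vsub v' m) <= 0 by lra.
  nra.
have Hvm : v' = m.
  apply: functional_extensionality => i. have := dot_self0 _ H0 i. rewrite /vsub. lra.
move=> z. rewrite (HK z) (HK v') -Hvm.
have -> : dot (vsub v' v') (vsub v' v') = 0 by rewrite dot_sub_sq; ring.
ring.
Qed.
Lemma final_a (A a tau mu L fy fx fxk P G W gw : R) :
  0 <= A -> 0 < a -> 0 < tau -> 0 < mu -> 0 < L -> 0 <= W -> 0 <= gw -> 0 <= G ->
  A * fxk + a * fy + (mu * a * tau * W + 2 * tau * a * gw - a ^ 2 * G) / (2 * (tau + mu * a)) <= P ->
  fy <= fxk ->
  a ^ 2 / ((tau + mu * a) * (A + a)) = 1 / L ->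
  fx <= fy - G / (2 * L) ->
  (A + a) * fx <= P.
Proof.
move=> HA Ha Ht Hmu HL HW Hgw HG HP Hfy Heq Hfx.
have Hma := Rmult_lt_0_compat _ _ Hmu Ha.
have Hd : 0 < (tau + mu * a) * (A + a) by apply: Rmult_lt_0_compat; lra.
have Ha2 : a ^ 2 = (tau + mu * a) * (A + a) / L.
  have := Rmult_eq_compat_r ((tau + mu * a) * (A + a)) _ _ Heq.
  have -> : a ^ 2 / ((tau + mu * a) * (A + a)) * ((tau + mu * a) * (A + a)) = a ^ 2 by field; nra.
  move=> ->. field. lra.
have E : (mu * a * tau * W + 2 * tau * a * gw - a ^ 2 * G) / (2 * (tau + mu * a))
       = (mu * a * tau * W + 2 * tau * a * gw) / (2 * (tau + mu * a)) - (A + a) * (G / (2 * L)).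
  rewrite Ha2. field. split; lra.
rewrite E in HP.
have : 0 <= (mu * a * tau * W + 2 * tau * a * gw) / (2 * (tau + mu * a)).
  apply: Rmult_le_pos.
    have h3 : 0 <= mu * a * tau * W by apply: Rmult_le_pos => //; apply: Rmult_le_pos; lra.
    have h5 : 0 <= tau * a * gw by apply: Rmult_le_pos => //; apply: Rmult_le_pos; lra.
    lra.
  apply: Rlt_le. apply: Rinv_0_lt_compat. lra.
have HAa : 0 <= A + a by lra.
have : (A + a) * fx <= (A + a) * (fy - G / (2 * L)) by apply: Rmult_le_compat_l.
have : A * fy <= A * fxk by apply: Rmult_le_compat_l.
nra.
Qed.

Lemma final_b (A a tau mu fy fx fxk P G W gw : R) :
  0 <= A -> 0 < a -> 0 < tau -> 0 < mu -> 0 <= gw ->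
  A * fxk + a * fy + (mu * a * tau * W + 2 * tau * a * gw - a ^ 2 * G) / (2 * (tau + mu * a)) <= P ->
  fy <= fxk ->
  fy - a ^ 2 * G / (2 * (tau + mu * a) * (A + a))
    + mu * tau * a * W / (2 * (tau + mu * a) * (A + a)) = fx ->
  (A + a) * fx <= P.
Proof.
move=> HA Ha Ht Hmu Hgw HP Hfy Heq.
have Hma := Rmult_lt_0_compat _ _ Hmu Ha.
have Hd : 0 < (tau + mu * a) * (A + a) by apply: Rmult_lt_0_compat; lra.
have E : (A + a) * fx = (A + a) * fy + (mu * a * tau * W - a ^ 2 * G) / (2 * (tau + mu * a)).
  rewrite -Heq. field. split; nra.
rewrite E.
have E2 : (mu * a * tau * W + 2 * tau * a * gw - a ^ 2 * G) / (2 * (tau + mu * a))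
  = (mu * a * tau * W - a ^ 2 * G) / (2 * (tau + mu * a)) + tau * a * gw / (tau + mu * a).
  field. lra.
rewrite E2 in HP.
have : 0 <= tau * a * gw / (tau + mu * a).
  apply: Rmult_le_pos. have : 0 <= tau * a by nra. nra.
  apply: Rlt_le. apply: Rinv_0_lt_compat. nra.
have : A * fy <= A * fxk by apply: Rmult_le_compat_l.
lra.
Qed.

Lemma bound1_step (L Ak a k : R) : 0 < L -> 0 < a -> 1 <= k ->
  Ak >= k ^ 2 / (4 * L) -> L * a ^ 2 >= Ak + a -> Ak + a >= (k + 1) ^ 2 / (4 * L).
Proof.
move=> HL Ha Hk HAk Hq.
have HAk' : k ^ 2 <= 4 * L * Ak.
  have := Rmult_le_compat_l (4 * L) _ _ ltac:(lra) (Rge_le _ _ HAk).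
  have -> : 4 * L * (k ^ 2 / (4 * L)) = k ^ 2 by field; lra. done.
have HB : 0 <= 4 * L * (Ak + a) by nra.
have Hs := sqrt_pos (4 * L * (Ak + a)). have Hs2 := sqrt_sqrt _ HB.
move: (sqrt (4 * L * (Ak + a))) Hs Hs2 => s Hs Hs2.
have Hal : s <= 2 * L * a.
  have : s * s <= (2 * L * a) * (2 * L * a) by nra.
  have : 0 <= 2 * L * a by nra.
  nra.
have H1 : k ^ 2 <= s * s - 2 * s by nra.
have H2 : 2 < s by nra.
have H3 : k <= s - 1 by nra.
apply: Rle_ge.
apply: (Rmult_le_reg_l (4 * L)); first lra.
have -> : 4 * L * ((k + 1) ^ 2 / (4 * L)) = (k + 1) ^ 2 by field; lra.
nra.
Qed.

Lemma bound2_step (L mu Ak a : R) (m : nat) : 0 < mu -> mu < L -> 0 < a -> 0 <= Ak ->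
  Ak >= 1 / L / (1 - sqrt (mu / L)) ^ m ->
  L * a ^ 2 >= (1 + mu * (Ak + a)) * (Ak + a) ->
  Ak + a >= 1 / L / (1 - sqrt (mu / L)) ^ (S m).
Proof.
move=> Hmu HmuL Ha HAk HI Hq.
have Hr : 0 < mu / L < 1.
  split. apply: Rdiv_lt_0_compat; lra.
  apply: (Rmult_lt_reg_r L); first lra. have -> : mu / L * L = mu by field; lra. lra.
have Hq0 : 0 < sqrt (mu / L) by apply: sqrt_lt_R0; lra.
have Hq2 : sqrt (mu / L) * sqrt (mu / L) = mu / L by apply: sqrt_sqrt; lra.
have Hq1 : sqrt (mu / L) < 1.
  rewrite -sqrt_1. apply: sqrt_lt_1_alt. lra.
move: (sqrt (mu / L)) Hq0 Hq2 Hq1 HI => q Hq0 Hq2 Hq1 HI.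
have HB : 0 < Ak + a by lra.
have HLq : L * (q * q) = mu by rewrite Hq2; field; lra.
have Hqa : q * (Ak + a) <= a.
  have : (q * (Ak + a)) * (q * (Ak + a)) <= a * a.
    have : L * ((q * (Ak + a)) * (q * (Ak + a))) <= L * (a * a).
      have -> : L * (q * (Ak + a) * (q * (Ak + a))) = mu * (Ak + a) * (Ak + a) by rewrite -HLq; ring.
      nra.
    move=> H. apply: (Rmult_le_reg_l L); lra.
  have : 0 <= q * (Ak + a) by nra.
  nra.
have HAkB : Ak <= (1 - q) * (Ak + a) by lra.
have Hpm := pow_lt (1 - q) m ltac:(lra).
have Hpm1 := pow_lt (1 - q) (S m) ltac:(lra).
rewrite /= in Hpm1 *.
apply: Rle_ge.
have HI' : 1 / L <= Ak * (1 - q) ^ m.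
  have H := Rmult_le_compat_r ((1 - q) ^ m) _ _ (Rlt_le _ _ Hpm) (Rge_le _ _ HI).
  have E : 1 / L / (1 - q) ^ m * (1 - q) ^ m = 1 / L by field; lra.
  rewrite E in H. exact H.
apply: (Rmult_le_reg_r ((1 - q) * (1 - q) ^ m)); first nra.
have -> : 1 / L / ((1 - q) * (1 - q) ^ m) * ((1 - q) * (1 - q) ^ m) = 1 / L by field; split; lra.
have : Ak * (1 - q) ^ m <= (1 - q) * (Ak + a) * (1 - q) ^ m by apply: Rmult_le_compat_r; lra.
nra.
Qed.
Lemma sc_lower n (f : vec n -> R) (gradf : vec n -> vec n) (mu : R) :
  0 < mu -> strongly_convex f gradf mu -> forall y z,
  f y - dot (gradf y) (gradf y) / (2 * mu) <= f z.
Proof.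
move=> Hmu Hsc y z. have H := Hsc y z. rewrite norm2_sq in H.
have H0 := dot_ge0 (vadd (gradf y) (vscale mu (vsub z y))).
rewrite !dot_addl !dot_addr !dot_scalel !dot_scaler (dot_comm (vsub z y) (gradf y)) in H0.
have E : dot (gradf y) (gradf y) / (2 * mu) =
   (dot (gradf y) (gradf y) + mu * dot (gradf y) (vsub z y) + mu * dot (gradf y) (vsub z y)
    + mu * (mu * dot (vsub z y) (vsub z y))) / (2 * mu)
   - dot (gradf y) (vsub z y) - mu / 2 * dot (vsub z y) (vsub z y).
  field. lra.
rewrite E.
have : 0 <= (dot (gradf y) (gradf y) + mu * dot (gradf y) (vsub z y) + mu * dot (gradf y) (vsub z y)
    + mu * (mu * dot (vsub z y) (vsub z y))) / (2 * mu).
  apply: Rmult_le_pos. lra. apply: Rlt_le. apply: Rinv_0_lt_compat. lra.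
lra.
Qed.

Lemma grad_pos n (g : vec n) : g <> (fun _ => 0) -> 0 < dot g g.
Proof.
move=> Hg. have := dot_ge0 g. case/Rle_lt_or_eq_dec => // H.
exfalso. apply: Hg. exact: dot_self0_vec (esym H).
Qed.

Theorem mainTheorem6 (n : nat) (f : vec n -> R) (gradf : vec n -> vec n) (L mu : R)
    (opt : bool) (x v y : nat -> vec n) (A a tau beta h : nat -> R) :
  0 < mu -> mu < L ->
  L_smooth f gradf L ->
  strongly_convex f gradf mu ->
  (forall k : nat, gradf (y k) <> (fun _ => 0)) ->
  AGMsDR_SC_run f gradf L mu opt x v y A a tau beta h ->
  (forall k : nat,
     A k * f (x k) <= psi f gradf mu (x 0%nat) a y k (v k) /\
     (forall z, psi f gradf mu (x 0%nat) a y k (v k)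
                <= psi f gradf mu (x 0%nat) a y k z)) /\
  (forall k : nat, (1 <= k)%nat ->
     A k >= INR k ^ 2 / (4 * L) /\
     A k >= 1 / L / (1 - sqrt (mu / L)) ^ (k - 1)).
Proof.
move=> Hmu HmuL Hsm Hsc Hgnz Hrun.
have HL : 0 < L by lra.
have [Hgrad _] := Hsm.
case: Hrun => HA0 [Ht0 [Hv0 Hk]].
have Hfy : forall k, f (y k) <= f (x k).
  move=> k. case: (Hk k) => [[Hb [Hmin Hy]] _].
  have E : vadd (v k) (vscale 1 (vsub (x k) (v k))) = x k.
    apply: functional_extensionality => i. rewrite /vadd /vscale /vsub. ring.
  have := Hmin 1 ltac:(lra). by rewrite E -Hy.
have Hopt : forall k, 0 <= dot (gradf (y k)) (vsub (v k) (y k)).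
  move=> k. case: (Hk k) => [[Hb [Hmin Hy]] _].
  rewrite Hy. apply: (line_opt _ f _ (x k) (v k) (beta k)) => //.
have HG : forall k, 0 < dot (gradf (y k)) (gradf (y k)).
  move=> k. exact: grad_pos _ _ (Hgnz k).
have Hdesc : forall k, f (vsub (y k) (vscale (1 / L) (gradf (y k))))
                      <= f (y k) - dot (gradf (y k)) (gradf (y k)) / (2 * L).
  move=> k. have H := descent _ _ _ _ HL Hsm (y k) (vscale (- (1 / L)) (gradf (y k))).
  have E : vadd (y k) (vscale (- (1 / L)) (gradf (y k))) = vsub (y k) (vscale (1 / L) (gradf (y k))).
    apply: functional_extensionality => i. rewrite /vadd /vscale /vsub. ring.
  rewrite E !dot_scalel !dot_scaler in H.
  move: H. move: (dot (gradf (y k)) (gradf (y k))) => G H.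
  apply: (Rle_trans _ _ _ H). apply: Req_le. field. lra.
have Hx1 : forall k, f (x (S k)) <= f (y k) - dot (gradf (y k)) (gradf (y k)) / (2 * L).
  move=> k. case: (Hk k) => [_ [Hstep _]].
  destruct opt; cbv iota beta zeta in Hstep.
    case: Hstep => -> _. exact: Hdesc.
  case: Hstep => _ [Hls [-> _]].
  have Hng : 0 < norm2 (gradf (y k)).
    rewrite /norm2. apply: sqrt_lt_R0. exact: HG.
  have E : vscale (norm2 (gradf (y k)) / L) (vscale (1 / norm2 (gradf (y k))) (gradf (y k)))
         = vscale (1 / L) (gradf (y k)).
    apply: functional_extensionality => i. rewrite /vscale. field. lra.
  have Hl := Hls (norm2 (gradf (y k)) / L) ltac:(apply: Rlt_le; apply: Rdiv_lt_0_compat; lra).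
  rewrite E in Hl. apply: Rle_trans Hl _. exact: Hdesc.
have Hx2 : forall k, f (y k) - dot (gradf (y k)) (gradf (y k)) / (2 * mu) < f (x (S k)).
  move=> k. apply: Rnot_le_lt => Hc.
  have Hall : forall z, f (x (S k)) <= f z.
    move=> z. apply: Rle_trans Hc _. exact: sc_lower.
  have H1 := Hfy (S k). have H2 := Hdesc (S k). have H3 := HG (S k).
  have H4 := Hall (vsub (y (S k)) (vscale (1 / L) (gradf (y (S k))))).
  have : 0 < dot (gradf (y (S k))) (gradf (y (S k))) / (2 * L) by apply: Rdiv_lt_0_compat; lra.
  lra.
have Hastep : forall k, 0 < tau k -> 0 <= A k ->
    0 < a (S k) /\ L * a (S k) ^ 2 >= (tau k + mu * a (S k)) * (A k + a (S k)).
  move=> k Htk HAk. case: (Hk k) => [_ [Hstep _]].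
  destruct opt; cbv iota beta zeta in Hstep.
    case: Hstep => _ [Ha Heq]. split => //.
    have Hma := Rmult_lt_0_compat _ _ Hmu Ha.
    have Hd : 0 < (tau k + mu * a (S k)) * (A k + a (S k)) by apply: Rmult_lt_0_compat; lra.
    have := Rmult_eq_compat_r ((tau k + mu * a (S k)) * (A k + a (S k)) * L) _ _ Heq.
    have -> : a (S k) ^ 2 / ((tau k + mu * a (S k)) * (A k + a (S k))) *
        ((tau k + mu * a (S k)) * (A k + a (S k)) * L) = L * a (S k) ^ 2 by field; lra.
    have -> : 1 / L * ((tau k + mu * a (S k)) * (A k + a (S k)) * L) =
        (tau k + mu * a (S k)) * (A k + a (S k)) by field; lra.
    move=> ->. lra.
  case: Hstep => _ [_ [_ [_ Hmax]]].
  apply: (opt_b_root L mu (tau k) (A k) (f (y k)) (f (x (S k))) (norm2 (gradf (y k)) ^ 2)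
                     (norm2 (vsub (v k) (y k)) ^ 2) (a (S k))) => //.
  - rewrite norm2_sq. exact: HG.
  - apply: pow2_ge_0.
  - rewrite norm2_sq. exact: Hx1.
  - rewrite norm2_sq. exact: Hx2.
have Inv : forall k, tau k = 1 + mu * A k /\ 0 <= A k /\
    A k * f (x k) <= psi f gradf mu (x 0%nat) a y k (v k) /\
    (forall z, psi f gradf mu (x 0%nat) a y k z
       = psi f gradf mu (x 0%nat) a y k (v k) + tau k / 2 * dot (vsub z (v k)) (vsub z (v k))).
  elim=> [|k [Htk [HAk [Hpk Hqk]]]].
    have Hp0 : forall z, psi f gradf mu (x 0%nat) a y 0 z = 1 / 2 * dot (vsub z (x 0%nat)) (vsub z (x 0%nat)).
      move=> z. rewrite -norm2_sq. reflexivity.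
    rewrite Ht0 HA0 !Hp0 Hv0.
    have E0 : dot (vsub (x 0%nat) (x 0%nat)) (vsub (x 0%nat) (x 0%nat)) = 0.
      rewrite dot_sub_sq. lra.
    rewrite E0. split; first ring. split; first lra. split; first lra.
    move=> z. rewrite Hp0. ring.
  have Htp : 0 < tau k by have := Rmult_le_pos _ _ (Rlt_le _ _ Hmu) HAk; lra.
  have [Ha HaQ] := Hastep k Htp HAk.
  case: (Hk k) => [_ [Hstep [HA1 [Ht1 Hminv]]]].
  have Hps : forall z, psi f gradf mu (x 0%nat) a y (S k) z =
     psi f gradf mu (x 0%nat) a y k (v k) + tau k / 2 * dot (vsub z (v k)) (vsub z (v k))
     + a (S k) * (f (y k) + dot (gradf (y k)) (vsub z (y k)) + mu / 2 * dot (vsub z (y k)) (vsub z (y k))).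
    move=> z.
    have -> : psi f gradf mu (x 0%nat) a y (S k) z = psi f gradf mu (x 0%nat) a y k z
      + a (S k) * (f (y k) + dot (gradf (y k)) (vsub z (y k)) + mu / 2 * norm2 (vsub z (y k)) ^ 2) by [].
    rewrite Hqk norm2_sq. ring.
  have Hma := Rmult_lt_0_compat _ _ Hmu Ha.
  have Hq' : forall z, psi f gradf mu (x 0%nat) a y (S k) z = psi f gradf mu (x 0%nat) a y (S k) (v (S k))
     + (tau k + mu * a (S k)) / 2 * dot (vsub z (v (S k))) (vsub z (v (S k))).
    apply: (psi_step _ _ _ _ _ _ _ _ _ _ _ _ Hps Hminv). lra.
  split; first by rewrite Ht1 HA1 Htk; ring.
  split; first by rewrite HA1; lra.
  split; last by move=> z; rewrite Ht1; exact: Hq'.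
  rewrite HA1.
  have Hlb := quad_lb _ (vsub (v (S k)) (y k)) (vsub (v k) (y k)) (gradf (y k)) (tau k) mu (a (S k)) Htp (Rlt_le _ _ Ha) Hmu.
  have Edw : vsub (vsub (v (S k)) (y k)) (vsub (v k) (y k)) = vsub (v (S k)) (v k).
    apply: functional_extensionality => i. rewrite /vsub. ring.
  rewrite Edw in Hlb.
  have HP : A k * f (x k) + a (S k) * f (y k) +
     (mu * a (S k) * tau k * dot (vsub (v k) (y k)) (vsub (v k) (y k))
      + 2 * tau k * a (S k) * dot (gradf (y k)) (vsub (v k) (y k))
      - a (S k) ^ 2 * dot (gradf (y k)) (gradf (y k))) / (2 * (tau k + mu * a (S k)))
     <= psi f gradf mu (x 0%nat) a y (S k) (v (S k)).
    rewrite Hps. lra.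
  case: (Hk k) => [_ [Hstep' _]].
  destruct opt; cbv iota beta zeta in Hstep'.
    case: Hstep' => Hx [_ Heq].
    apply: (final_a (A k) (a (S k)) (tau k) mu L (f (y k)) (f (x (S k))) (f (x k)) _
        (dot (gradf (y k)) (gradf (y k))) (dot (vsub (v k) (y k)) (vsub (v k) (y k)))
        (dot (gradf (y k)) (vsub (v k) (y k)))) => //.
    all: first [apply: dot_ge0 | exact: Hopt | (apply: Rlt_le; exact: HG) | exact: Hfy | exact: Hx1 | idtac].
  case: Hstep' => _ [_ [_ [Heq _]]].
  rewrite !norm2_sq in Heq.
  apply: (final_b (A k) (a (S k)) (tau k) mu (f (y k)) (f (x (S k))) (f (x k)) _
        (dot (gradf (y k)) (gradf (y k))) (dot (vsub (v k) (y k)) (vsub (v k) (y k)))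
        (dot (gradf (y k)) (vsub (v k) (y k)))) => //.
split.
  move=> k. have [_ [_ [Hp Hq]]] := Inv k. split => // z.
  have [Htk [HAk _]] := Inv k.
  rewrite (Hq z).
  have := dot_ge0 (vsub z (v k)).
  have := Rmult_le_pos _ _ (Rlt_le _ _ Hmu) HAk.
  move=> H1 H2. have : 0 <= tau k / 2 * dot (vsub z (v k)) (vsub z (v k)).
    apply: Rmult_le_pos => //. lra.
  lra.
have Hstep2 : forall k, 0 < a (S k) /\ L * a (S k) ^ 2 >= (1 + mu * A (S k)) * A (S k) /\ A (S k) = A k + a (S k) /\ 0 <= A k.
  move=> k. have [Htk [HAk _]] := Inv k.
  have Htp : 0 < tau k by have := Rmult_le_pos _ _ (Rlt_le _ _ Hmu) HAk; lra.
  have [Ha HaQ] := Hastep k Htp HAk.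
  case: (Hk k) => [_ [_ [HA1 [Ht1 _]]]].
  split => //. split; last by split.
  rewrite HA1. have -> : 1 + mu * (A k + a (S k)) = tau k + mu * a (S k) by rewrite Htk; ring.
  exact: HaQ.
move=> k Hk1.
case: k Hk1 => [//|m] _.
have -> : (m.+1 - 1)%nat = m by rewrite subn1.
split.
  elim: m => [|m IH].
    have [Ha [HQ [HA1 _]]] := Hstep2 0%nat. rewrite HA1 HA0 Rplus_0_l in HQ *.
    have : a 1%nat >= 1 / L.
      apply: Rle_ge. apply: (Rmult_le_reg_r (L * a 1%nat)); first nra.
      have -> : 1 / L * (L * a 1%nat) = a 1%nat by field; lra.
      have : 0 <= mu * a 1%nat * a 1%nat by have := Rmult_lt_0_compat _ _ Hmu Ha; nra.
      nra.
    move=> H. simpl. have : 1 / (4 * L) <= 1 / L.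
      apply: Rmult_le_compat_l; first lra. apply: Rinv_le_contravar; lra.
    have -> : 1 * (1 * 1) / (4 * L) = 1 / (4 * L) by field; lra.
    lra.
  have [Ha [HQ [HA1 HAk]]] := Hstep2 (S m).
  rewrite HA1. rewrite S_INR.
  apply: bound1_step => //.
    have := pos_INR m. rewrite S_INR. lra.
  rewrite HA1 in HQ.
  have : 0 <= mu * (A (S m) + a (S (S m))) * (A (S m) + a (S (S m))).
    apply: Rmult_le_pos; last lra. apply: Rmult_le_pos; lra.
  nra.
elim: m => [|m IH].
  have [Ha [HQ [HA1 _]]] := Hstep2 0%nat. rewrite HA1 HA0 Rplus_0_l in HQ *.
  apply: Rle_ge. simpl. apply: (Rmult_le_reg_r (L * a 1%nat)); first nra.
  have -> : 1 / L / 1 * (L * a 1%nat) = a 1%nat by field; lra.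
  have : 0 <= mu * a 1%nat * a 1%nat by have := Rmult_lt_0_compat _ _ Hmu Ha; nra.
  nra.
have [Ha [HQ [HA1 HAk]]] := Hstep2 (S m).
rewrite HA1. rewrite HA1 in HQ.
exact: bound2_step.
Qed.
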